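(* Let $q$ be a prime power and let $C_2\subsetneq C_1\subseteq\mathbf{F}_q^n$ be $\mathbf{F}_q$-linear codes with $\dim C_1-\dim C_2=L$. Fix an $\mathbf{F}_q$-linear isomorphism $f:\mathbf{F}_q^L\to C_1/C_2$ (so each $f(\vec{s})$ is a coset of $C_2$ in $C_1$, viewed as a subset of $C_1$). Consider the quantum ramp secret sharing scheme which encodes each basis state $|\vec{s}\rangle\in\bigotimes_{i=1}^L\mathcal{G}_i$, $\vec{s}\in\mathbf{F}_q^L$, to \[ \frac{1}{\sqrt{|C_2|}}\sum_{\vec{x}\in f(\vec{s})}|\vec{x}\rangle\in\bigotimes_{j=1}^n\mathcal{H}_j, \] extended complex-linearly, with $\mathcal{H}_j$ being the $j$-th share. Let $I\subseteq\{1,\ldots,L\}$, $\overline{I}=\{1,\ldots,L\}\setminus I$, $J\subseteq\{1,\ldots,n\}$, $\overline{J}=\{1,\ldots,n\}\setminus J$, and define the codes in $\mathbf{F}_q^{n+|\overline{I}|}$ \[ C'_1=\{(\vec{x},P_{\overline{I}}(\vec{s})) : \vec{s}\in\mathbf{F}_q^L,\ \vec{x}\in f(\vec{s})\},\qquad C'_2=\{(\vec{x},P_{\overline{I}}(\vec{s})) : \vec{s}\in\mathbf{F}_q^L,\ P_I(\vec{s})=\vec{0},\ \vec{x}\in f(\vec{s})\}. \] Then the scheme is strongly secure with respect to $I$ and $J$ if and only if \[ \dim P_J(C'_1)-\dim P_J(C'_2)=0 \] and \[ \dim P_{\overline{J}\cup\{n+1,\ldots,n+|\overline{I}|\}}(C'_1)-\dim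 P_{\overline{J}\cup\{n+1,\ldots,n+|\overline{I}|\}}(C'_2)=|I|. \]
   Context: All $\mathcal{G}_i$ ($i=1,\ldots,L$) and $\mathcal{H}_j$ ($j=1,\ldots,n$) are $q$-dimensional complex Hilbert spaces with orthonormal basis $\{|a\rangle : a\in\mathbf{F}_q\}$; for $\vec{x}\in\mathbf{F}_q^n$, $|\vec{x}\rangle=|x_1\rangle\otimes\cdots\otimes|x_n\rangle$. For an index set $K$ and a vector $\vec{v}$, $P_K(\vec{v})=(v_k)_{k\in K}$ is the projection (puncturing) onto the coordinates in $K$; for a code $C$, $P_K(C)=\{P_K(\vec{v}):\vec{v}\in C\}$. In $C'_1,C'_2$ the first $n$ coordinates are those of $\vec{x}$ and coordinates $n+1,\ldots,n+|\overline{I}|$ are those of $P_{\overline{I}}(\vec{s})$. For $I\subseteq\{1,\ldots,L\}$ let $\mathcal{G}_I=\bigotimes_{i\in I}\mathcal{G}_i$ and $\mathcal{G}_{\overline{I}}=\bigotimes_{i\in\overline{I}}\mathcal{G}_i$. Definition (strong security): the scheme is strongly secure with respect to $I$ and $J$ if the quantum state $\sigma_J$ of the shares in $\bigotimes_{j\in J}\mathcal{H}_j$ (the reduced state of the encoded secret) is always the same state regardless of $\rho_I$, when the whole quantum secret is in the state $\rho_I\otimes\rho_{\overline{I},\mathrm{mix}}$, where $\rho_I$ is an arbitrary state on $\mathcal{G}_I$ and $\rho_{\overline{I},\mathrm{mix}}$ is the fully mixed state on $\mathcal{G}_{\overline{I}}$. *)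

(* Defs.v *)
From HB Require Import structures.
From mathcomp Require Import all_boot all_order all_algebra all_field.
From mathcomp Require Import algC.
Set Implicit Arguments. Unset Strict Implicit. Unset Printing Implicit Defensive.
Import Order.TTheory GRing.Theory Num.Theory.
Local Open Scope ring_scope.

Section Defs.
Variable F : finFieldType.

(* Puncturing P_K : F^N -> F^{|K|}, coordinates of K kept in increasing order. *)
Definition projK (N : nat) (K : {set 'I_N}) (v : 'rV[F]_N) : 'rV[F]_#|K| :=
  \row_(k < #|K|) v 0 (enum_val k).

Definition projS (N : nat) (K : {set 'I_N}) (S : {set 'rV[F]_N})
  : {set 'rV[F]_#|K|} := [set projK K v | v in S].

Definition dimS (N : nat) (S : {set 'rV[F]_N}) : nat := \dim <<enum S>>%VS.

(* the F-linear isomorphism f : F^L -> C1/C2 is given by a linear lift g,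
   f s = g s + C2 *)
Definition cosetS (n L : nat) (C2 : {vspace 'rV[F]_n}) (g : 'rV[F]_L -> 'rV[F]_n)
  (s : 'rV[F]_L) : {set 'rV[F]_n} := [set x | x - g s \in C2].

Definition is_quotient_iso (n L : nat) (C1 C2 : {vspace 'rV[F]_n})
  (g : 'rV[F]_L -> 'rV[F]_n) : Prop :=
  [/\ forall (a : F) (u v : 'rV[F]_L), g (a *: u + v) = a *: g u + g v,
      forall s, g s \in C1
    & forall s, g s \in C2 -> s = 0].

Definition C1' (n L : nat) (C2 : {vspace 'rV[F]_n}) (g : 'rV[F]_L -> 'rV[F]_n)
  (I : {set 'I_L}) : {set 'rV[F]_(n + #|~: I|)} :=
  [set row_mx x (projK (~: I) s) | s in [set: 'rV[F]_L], x in cosetS C2 g s].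

Definition C2' (n L : nat) (C2 : {vspace 'rV[F]_n}) (g : 'rV[F]_L -> 'rV[F]_n)
  (I : {set 'I_L}) : {set 'rV[F]_(n + #|~: I|)} :=
  [set row_mx x (projK (~: I) s) | s in [set s : 'rV[F]_L | projK I s == 0],
                                   x in cosetS C2 g s].
End Defs.

(* Quantum part: operators on the Hilbert space with orthonormal basis
   indexed by a finite type T are matrices T -> T -> algC. *)
Definition is_state (T : finType) (rho : T -> T -> algC) : Prop :=
  (forall v : T -> algC,
     0 <= \sum_(x : T) \sum_(y : T) (v x)^* * rho x y * v y)
  /\ \sum_(x : T) rho x x = 1.

Section Quantum.
Variable F : finFieldType.

(* rho_I (x) rho_{Ibar,mix} on the secret space (basis |s>, s in F^L) *)
Definition secret_state (L : nat) (I : {set 'I_L})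
  (rhoI : 'rV[F]_#|I| -> 'rV[F]_#|I| -> algC) (s t : 'rV[F]_L) : algC :=
  rhoI (projK I s) (projK I t) *
  (if projK (~: I) s == projK (~: I) t then ((#|F|%:R) ^+ #|~: I|)^-1 else 0).

(* amplitude <x| E |s> of the encoding isometry *)
Definition enc_amp (n L : nat) (C2 : {vspace 'rV[F]_n}) (g : 'rV[F]_L -> 'rV[F]_n)
  (x : 'rV[F]_n) (s : 'rV[F]_L) : algC :=
  if x \in cosetS C2 g s
  then (sqrtC (#|[set y : 'rV[F]_n | y \in C2]|%:R))^-1 else 0.

Definition encode (n L : nat) (C2 : {vspace 'rV[F]_n}) (g : 'rV[F]_L -> 'rV[F]_n)
  (rho : 'rV[F]_L -> 'rV[F]_L -> algC) (x y : 'rV[F]_n) : algC :=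
  \sum_(s : 'rV[F]_L) \sum_(t : 'rV[F]_L)
     enc_amp C2 g x s * rho s t * (enc_amp C2 g y t)^*.

Definition ptrace (n : nat) (J : {set 'I_n}) (sigma : 'rV[F]_n -> 'rV[F]_n -> algC)
  (a b : 'rV[F]_#|J|) : algC :=
  \sum_(x : 'rV[F]_n | projK J x == a)
   \sum_(y : 'rV[F]_n | (projK J y == b) && (projK (~: J) y == projK (~: J) x))
     sigma x y.

Definition strongly_secure (n L : nat) (C2 : {vspace 'rV[F]_n})
  (g : 'rV[F]_L -> 'rV[F]_n) (I : {set 'I_L}) (J : {set 'I_n}) : Prop :=
  forall rho1 rho2 : 'rV[F]_#|I| -> 'rV[F]_#|I| -> algC,
    is_state rho1 -> is_state rho2 ->
    forall a b : 'rV[F]_#|J|,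
      ptrace (J := J) (encode C2 g (secret_state (I := I) rho1)) a b =
      ptrace (J := J) (encode C2 g (secret_state (I := I) rho2)) a b.
End Quantum.

Definition Jcoords (n m : nat) (J : {set 'I_n}) : {set 'I_(n + m)} :=
  [set lshift m j | j in J].
Definition Jbar_ext_coords (n m : nat) (J : {set 'I_n}) : {set 'I_(n + m)} :=
  [set lshift m j | j in ~: J] :|: [set rshift n k | k in [set: 'I_m]].

(* Main.v *)
Require Import Defs.
From HB Require Import structures.
From mathcomp Require Import all_boot all_order all_algebra all_field.
From mathcomp Require Import algC ring zify.
Import Order.TTheory GRing.Theory Num.Theory.
Set Implicit Arguments. Unset Strict Implicit. Unset Printing Implicit Defensive.
Local Open Scope ring_scope.

Section Gen.
Variable F : finFieldType.

Lemma projK_lin N (K : {set 'I_N}) a (u v : 'rV[F]_N) :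
  projK K (a *: u + v) = a *: projK K u + projK K v.
Proof. by apply/rowP=> k; rewrite !mxE. Qed.
Lemma projK0 N (K : {set 'I_N}) : projK K (0 : 'rV[F]_N) = 0.
Proof. by apply/rowP=> k; rewrite !mxE. Qed.
Lemma projKD N (K : {set 'I_N}) (u v : 'rV[F]_N) :
  projK K (u + v) = projK K u + projK K v.
Proof. by apply/rowP=> k; rewrite !mxE. Qed.
Lemma projKB N (K : {set 'I_N}) (u v : 'rV[F]_N) :
  projK K (u - v) = projK K u - projK K v.
Proof. by apply/rowP=> k; rewrite !mxE. Qed.

Lemma projK_eq0P N (K : {set 'I_N}) (v : 'rV[F]_N) :
  projK K v = 0 <-> (forall i, i \in K -> v 0 i = 0).
Proof.
split.
- move=> H i iK; have := congr1 (fun w : 'rV_#|K| => w 0 (enum_rank_in iK i)) H.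
  by rewrite !mxE enum_rankK_in.
- move=> H; apply/rowP=> k; rewrite !mxE; apply: H; exact: enum_valP.
Qed.

Lemma projK_surj N (K : {set 'I_N}) (u : 'rV[F]_#|K|) :
  exists s : 'rV[F]_N, projK K s = u.
Proof.
exists (\row_i \sum_k (if enum_val k == i then u 0 k else 0)).
apply/rowP=> k'; rewrite !mxE (bigD1 k') //= eqxx big1 ?addr0 // => k nk.
by rewrite (inj_eq enum_val_inj) (negbTE nk).
Qed.

Definition subsp (V : finLmodType F) (S : {set V}) :=
  0 \in S /\ forall a u v, u \in S -> v \in S -> a *: u + v \in S.

Lemma card_subsp N (S : {set 'rV[F]_N}) : subsp S -> #|S| = (#|F| ^ dimS S)%N.
Proof.
case=> S0 Slin; rewrite /dimS -card_vspace; apply: eq_card => x.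
apply/idP/idP.
- by move=> xS; apply: memv_span; rewrite mem_enum.
- move/(coord_span (X := in_tuple (enum S))) ->.
  apply: (big_ind (fun v => v \in S)) => //.
  + by move=> u v uS vS; have := Slin 1 u v uS vS; rewrite scale1r.
  + move=> i _; rewrite -[_ *: _]addr0; apply: Slin => //.
    by rewrite -mem_enum; apply: mem_nth.
Qed.

Lemma card_fiber (U V : finZmodType) (D : {set U}) (f : U -> V) :
  (forall u v, u \in D -> v \in D -> u - v \in D) ->
  (forall u v, f (u - v) = f u - f v) ->
  #|D| = (#|[set x in D | f x == 0%R]| * #|f @: D|)%N.
Proof.
move=> DB fB.
have f0 : f 0 = 0 by rewrite -(subrr 0) fB subrr.
have fN u : f (- u) = - f u by rewrite -sub0r fB f0 sub0r.
have fD u v : f (u + v) = f u + f v by rewrite -{1}[v]opprK fB fN opprK.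
rewrite -sum1_card (partition_big_imset f) /= mulnC -sum_nat_const.
apply: eq_bigr => y /imsetP [x0 x0D ->].
rewrite -(card_imset _ (addIr x0)) -sum1_card.
apply: eq_bigl => x; rewrite ?inE.
apply/andP/imsetP.
- case=> xD /eqP fx; exists (x - x0); last by rewrite subrK.
  by rewrite inE DB //= fB fx subrr.
- case=> z; rewrite inE => /andP [zD /eqP fz] ->.
  have D0 : 0 \in D by rewrite -(subrr x0) DB.
  split; last by rewrite fD fz add0r.
  have Nx0 : - x0 \in D by rewrite -sub0r DB.
  by have := DB z (- x0) zD Nx0; rewrite opprK.
Qed.
End Gen.

Section States.
Variable W : finType.
Variable N : W * W -> nat.

Definition SG (rho : W -> W -> algC) := \sum_p rho p.1 p.2 * (N p)%:R.

Lemma SG_diag (w0 : W) : (forall u v, u != v -> N (u, v) = 0%N) ->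
  (forall u v, N (u, u) = N (v, v)) ->
  forall rho, \sum_x rho x x = 1 -> SG rho = (N (w0, w0))%:R.
Proof.
move=> Hoff Hdiag rho tr1; rewrite /SG (eq_bigr (fun p => rho p.1 p.2 * (N (p.1, p.2))%:R)); last by case.
rewrite -(pair_bigA _ (fun x y => rho x y * (N (x, y))%:R)).
transitivity (\sum_x rho x x * (N (w0, w0))%:R); last by rewrite -mulr_suml tr1 mul1r.
apply: eq_bigr => x _.
rewrite (bigD1 x) //= big1 ?addr0; last by move=> y ny; rewrite Hoff ?mulr0 // eq_sym.
by rewrite (Hdiag x w0).
Qed.

Definition delta (u : W) : W -> algC := fun x => (x == u)%:R.
Definition r1 (r : algC) (w : W -> algC) : W -> W -> algC := fun x y => r * w x * w y.

Lemma sum_delta (u : W) (f : W -> algC) : \sum_x delta u x * f x = f u.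
Proof.
rewrite (bigD1 u) //= /delta eqxx mul1r big1 ?addr0 // => x /negbTE ->.
by rewrite mul0r.
Qed.

Lemma sum_delta2 (u v : W) (f : W -> algC) :
  \sum_x (delta u x + delta v x) * f x = f u + f v.
Proof.
by rewrite -!sum_delta -big_split; apply: eq_bigr => x _; rewrite mulrDl.
Qed.

Lemma r1_state r w : 0 <= r -> (forall x, (w x)^* = w x) ->
  r * \sum_x w x * w x = 1 -> is_state (r1 r w).
Proof.
move=> r0 wR tr; split; last by rewrite -tr mulr_sumr; apply: eq_bigr => x _; rewrite /r1 mulrA.
move=> v.
have -> : \sum_x \sum_y (v x)^* * r1 r w x y * v y =
   r * ((\sum_y w y * v y)^* * (\sum_y w y * v y)).
  rewrite rmorph_sum big_distrlr mulr_sumr; apply: eq_bigr => x _.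
  rewrite mulr_sumr; apply: eq_bigr => y _.
  by rewrite rmorphM /= wR /r1; ring.
by rewrite mulr_ge0 // mulrC mul_conjC_ge0.
Qed.

Lemma SG_r1 r w : SG (r1 r w) = r * \sum_x w x * \sum_y w y * (N (x, y))%:R.
Proof.
rewrite /SG (eq_bigr (fun p => r1 r w p.1 p.2 * (N (p.1, p.2))%:R)); last by case.
rewrite -(pair_bigA _ (fun x y => r1 r w x y * (N (x, y))%:R)) mulr_sumr.
apply: eq_bigr => x _; rewrite !mulr_sumr; apply: eq_bigr => y _.
by rewrite /r1; ring.
Qed.

Lemma delta_state u : is_state (r1 1 (delta u)).
Proof.
apply: r1_state => //; first by move=> x; rewrite /delta conjC_nat.
by rewrite sum_delta /delta eqxx mulr1n mulr1.
Qed.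

Lemma delta2_state u v : u != v -> is_state (r1 2^-1 (fun x => delta u x + delta v x)).
Proof.
move=> uv; apply: r1_state.
- by rewrite invr_ge0 ler0n.
- by move=> x; rewrite rmorphD /= /delta !conjC_nat.
- rewrite sum_delta2 /delta !eqxx (negbTE uv) eq_sym (negbTE uv) addr0 add0r.
  by rewrite mulVf // pnatr_eq0.
Qed.

Lemma SG_delta u : SG (r1 1 (delta u)) = (N (u, u))%:R.
Proof. by rewrite SG_r1 mul1r sum_delta sum_delta. Qed.

Lemma SG_delta2 u v : SG (r1 2^-1 (fun x => delta u x + delta v x)) =
  2^-1 * ((N (u, u) + N (u, v)) + (N (v, u) + N (v, v)))%:R.
Proof.
rewrite SG_r1 sum_delta2 !sum_delta2 !natrD; congr (_ * _).
Qed.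

Lemma SG_const_good :
  (forall rho1 rho2, is_state rho1 -> is_state rho2 -> SG rho1 = SG rho2) ->
  (forall u v, u != v -> N (u, v) = 0%N) /\ (forall u v, N (u, u) = N (v, v)).
Proof.
move=> H.
have Hd u v : N (u, u) = N (v, v).
  by apply/eqP; rewrite -(eqr_nat algC) -!SG_delta (H _ _ (delta_state u) (delta_state v)).
split=> // u v uv.
have := H _ _ (delta2_state uv) (delta_state u); rewrite SG_delta2 SG_delta.
move/(congr1 (fun z => 2 * z)); rewrite mulrA mulfV ?pnatr_eq0 // mul1r.
rewrite -natrM => /eqP; rewrite eqr_nat (Hd v u) => /eqP.
move=> h; have {}h : (N (u, u) + N (u, v) + (N (v, u) + N (u, u)) = 2 * N (u, u))%N by exact h. lia.
Qed.
End States.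

Lemma split0 (F : finFieldType) N (K : {set 'I_N}) (v : 'rV[F]_N) :
  projK K v = 0 -> projK (~: K) v = 0 -> v = 0.
Proof.
move=> /projK_eq0P h1 /projK_eq0P h2; apply/rowP=> i; rewrite mxE.
case: (boolP (i \in K)) => iK; first exact: h1.
by apply: h2; rewrite inE.
Qed.

Definition PT (F : finFieldType) (L n : nat) := ('rV[F]_L * 'rV[F]_n)%type.
HB.instance Definition _ (F : finFieldType) (L n : nat) := GRing.Lmodule.on (PT F L n).
HB.instance Definition _ (F : finFieldType) (L n : nat) := Finite.on (PT F L n).

Lemma projK_eqP (F : finFieldType) N (K : {set 'I_N}) (v w : 'rV[F]_N) :
  projK K v = projK K w <-> (forall i, i \in K -> v 0 i = w 0 i).
Proof.
split.
- move=> H i iK; have := congr1 (fun z : 'rV_#|K| => z 0 (enum_rank_in iK i)) H.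
  by rewrite !mxE enum_rankK_in.
- move=> H; apply/rowP=> k; rewrite !mxE; apply: H; exact: enum_valP.
Qed.

Lemma lin_sub (F : finFieldType) (V1 V2 : lmodType F) (f : V1 -> V2) :
  (forall a u v, f (a *: u + v) = a *: f u + f v) ->
  forall u v, f (u - v) = f u - f v.
Proof.
move=> fl u v; rewrite addrC; have := fl (-1) v u; rewrite !scaleN1r => ->.
by rewrite addrC.
Qed.

Lemma subsp_img (F : finFieldType) (V1 V2 : finLmodType F) (S : {set V1}) (f : V1 -> V2) :
  (forall a u v, f (a *: u + v) = a *: f u + f v) -> subsp S -> subsp (f @: S).
Proof.
move=> fl [S0 Sl]; have f0 : f 0 = 0.
  by have := lin_sub fl 0 0; rewrite subrr => ->; rewrite subrr.
split; first by rewrite -f0 imset_f.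
move=> a _ _ /imsetP [u uS ->] /imsetP [v vS ->].
by rewrite -fl imset_f ?Sl.
Qed.

Lemma subspB (F : finFieldType) (V : finLmodType F) (S : {set V}) u v :
  subsp S -> u \in S -> v \in S -> u - v \in S.
Proof. by case=> _ Sl uS vS; have := Sl (-1) v u vS uS; rewrite scaleN1r addrC. Qed.

Section Scheme.
Variables (F : finFieldType) (n L : nat) (C2 : {vspace 'rV[F]_n})
  (g : 'rV[F]_L -> 'rV[F]_n) (I : {set 'I_L}) (J : {set 'I_n}).
Hypothesis glin : forall (a : F) (u v : 'rV[F]_L), g (a *: u + v) = a *: g u + g v.
Hypothesis ginj : forall s, g s \in C2 -> s = 0.

Definition inC s x := x \in cosetS C2 g s.
Lemma inCE s x : inC s x = (x - g s \in C2).
Proof. by rewrite /inC /cosetS inE. Qed.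
Lemma g0 : g 0 = 0.
Proof. by have := glin (-1) 0 0; rewrite scaler0 add0r scaleN1r addNr. Qed.
Lemma inC_lin a s x t y : inC s x -> inC t y -> inC (a *: s + t) (a *: x + y).
Proof.
rewrite !inCE glin => hx hy; rewrite opprD addrACA -scalerBr.
by rewrite rpredD ?rpredZ.
Qed.
Lemma inC00 : inC 0 0.
Proof. by rewrite inCE g0 subrr mem0v. Qed.
Lemma inCg s : inC s (g s).
Proof. by rewrite inCE subrr mem0v. Qed.
Lemma inC_add s x t y : inC s x -> inC t y -> inC (s + t) (x + y).
Proof. by move=> hx hy; have := inC_lin 1 hx hy; rewrite !scale1r. Qed.
Lemma inC_opp t y : inC t y -> inC (- t) (- y).
Proof. by move=> hy; have := inC_lin (-1) hy inC00; rewrite !addr0 !scaleN1r. Qed.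
Lemma inC_sub s x t y : inC s x -> inC t y -> inC (s - t) (x - y).
Proof. by move=> hx hy; apply: inC_add hx (inC_opp hy). Qed.
Lemma inC_uniq s t x : inC s x -> inC t x -> s = t.
Proof.
move=> hs ht; have := inC_sub hs ht; rewrite subrr inCE sub0r rpredN => /ginj.
by move/eqP; rewrite subr_eq0 => /eqP.
Qed.

Definition Cond1 := forall u : 'rV[F]_#|I|,
  exists s x, [/\ inC s x, projK J x = 0 & projK I s = u].
Definition Cond2 := forall s x, inC s x -> projK (~: J) x = 0 ->
  projK (~: I) s = 0 -> s = 0.

Definition Q := (('rV[F]_n * 'rV[F]_n) * ('rV[F]_L * 'rV[F]_L))%type.
Definition Cnd (a b : 'rV[F]_#|J|) (q : Q) :=
  ((projK J q.1.1 == a) &&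
   ((projK J q.1.2 == b) && (projK (~: J) q.1.2 == projK (~: J) q.1.1))) &&
  [&& inC q.2.1 q.1.1, inC q.2.2 q.1.2 & projK (~: I) q.2.1 == projK (~: I) q.2.2].
Definition phiQ (q : Q) := (projK I q.2.1, projK I q.2.2).
Definition Nc a b p := #|[set q | Cnd a b q && (phiQ q == p)]|.

Lemma N_off (H2 : Cond2) a b u v : u != v -> Nc a b (u, v) = 0%N.
Proof.
move=> uv; apply/eqP; rewrite cards_eq0; apply/eqP/setP => q; rewrite !inE.
apply/negbTE/negP; case: q => [[x y] [s t]]; rewrite /Cnd /phiQ /=.
move=> /andP [/andP [/andP [_ /andP [_ hJ]] /and3P [hx hy hI]] /eqP [hu hv]].
have := H2 _ _ (inC_sub hx hy); rewrite !projKB (eqP hJ) (eqP hI) !subrr.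
move=> /(_ erefl erefl) /eqP; rewrite subr_eq0 => /eqP st.
by move: uv; rewrite -hu -hv st eqxx.
Qed.

Lemma N_off_conv (H : forall a b u v, u != v -> Nc a b (u, v) = 0%N) : Cond2.
Proof.
move=> s x hx hJ hI; case: (eqVneq s 0) => // s0.
have nz : projK I s != 0.
  by apply/eqP => hs; move/eqP: s0; apply; exact: split0 hs hI.
move: (H (projK J x) 0 (projK I s) 0 nz) => /eqP; rewrite cards_eq0.
move=> /eqP /setP /(_ ((x, 0), (s, 0))); rewrite !inE /Cnd /phiQ /=.
by rewrite !projK0 hJ hI hx inC00 !eqxx.
Qed.

Lemma N_diag_le (H1 : Cond1) a b u v : (Nc a b (u, u) <= Nc a b (v, v))%N.
Proof.
have [s0 [x0 [hx0 hJ0 hI0]]] := H1 (v - u).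
pose tr (q : Q) : Q := ((q.1.1 + x0, q.1.2 + x0), (q.2.1 + s0, q.2.2 + s0)).
have tr_inj : injective tr.
  move=> [[x y] [s t]] [[x' y'] [s' t']] [].
  by move=> /addIr -> /addIr -> /addIr -> /addIr ->.
rewrite /Nc -(card_imset _ tr_inj); apply: subset_leq_card; apply/subsetP.
move=> q' /imsetP [[[x y] [s t]]]; rewrite inE /Cnd /phiQ /=.
move=> /andP [/andP [/andP [ha /andP [hb hJ]] /and3P [hx hy hI]] /eqP [hu hu']] ->.
rewrite inE /Cnd /phiQ /= !projKD hJ0 !addr0 ha hb (eqP hJ) (eqP hI) !eqxx /=.
rewrite !inC_add // hu hu' hI0 (addrC u) subrK eqxx.
by [].
Qed.

Lemma N_diag (H1 : Cond1) a b u v : Nc a b (u, u) = Nc a b (v, v).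
Proof. by apply/eqP; rewrite eqn_leq !N_diag_le. Qed.

Lemma N_diag_conv (H : forall a b u v, Nc a b (u, u) = Nc a b (v, v)) : Cond1.
Proof.
move=> u.
have q0 : ((0, 0), (0, 0)) \in [set q : Q | Cnd 0 0 q && (phiQ q == (0, 0))].
  by rewrite inE /Cnd /phiQ /= !projK0 inC00 !eqxx.
have : (0 < Nc 0 0 (u, u))%N.
  by rewrite (H 0 0 u 0) card_gt0; apply/set0Pn; exists ((0, 0), (0, 0)).
rewrite card_gt0 => /set0Pn [[[x y] [s t]]]; rewrite inE /Cnd /phiQ /=.
move=> /andP [/andP [/andP [ha _] /and3P [hx _ _]] /eqP [hu _]].
by exists s, x; split => //; apply/eqP.
Qed.

Lemma sum_pair (T1 T2 : finType) (K : T1 * T2 -> algC) :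
  \sum_p K p = \sum_x \sum_y K (x, y).
Proof. by rewrite pair_bigA; apply: eq_bigr => -[]. Qed.

Definition cc : algC := (sqrtC (#|[set y : 'rV[F]_n | y \in C2]|%:R))^-1.
Definition dd : algC := ((#|F|%:R) ^+ #|~: I|)^-1.
Definition kappa : algC := cc * cc^* * dd.

Lemma kappa_neq0 : kappa != 0.
Proof.
have c0 : cc != 0.
  rewrite /cc invr_eq0 sqrtC_eq0 pnatr_eq0 -lt0n; apply/card_gt0P.
  by exists 0; rewrite inE mem0v.
rewrite /kappa !mulf_neq0 ?conjC_eq0 // /dd invr_eq0 expf_neq0 // pnatr_eq0.
by rewrite -lt0n; apply/card_gt0P; exists 0.
Qed.

Lemma step1 (rhoI : 'rV[F]_#|I| -> 'rV[F]_#|I| -> algC) x y s t :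
  enc_amp C2 g x s * secret_state rhoI s t * (enc_amp C2 g y t)^* =
  (if [&& inC s x, inC t y & projK (~: I) s == projK (~: I) t] then kappa else 0)
  * rhoI (projK I s) (projK I t).
Proof.
rewrite /enc_amp /secret_state /inC -/cc -/dd /kappa.
case: (x \in cosetS C2 g s); case: (y \in cosetS C2 g t);
  case: (projK (~: I) s == projK (~: I) t);
  rewrite /= ?conjC0 ?mulr0 ?mul0r //; ring.
Qed.

Lemma step2 rhoI a b :
  ptrace (J := J) (encode C2 g (secret_state (I := I) rhoI)) a b =
  \sum_(q : Q) (if Cnd a b q then kappa else 0) * rhoI (phiQ q).1 (phiQ q).2.
Proof.
rewrite sum_pair sum_pair /ptrace /encode big_mkcond; apply: eq_bigr => x _.
case: ifP => ha.
- rewrite big_mkcond; apply: eq_bigr => y _; case: ifP => hb.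
  + rewrite sum_pair; apply: eq_bigr => s _; apply: eq_bigr => t _.
    by rewrite step1 /Cnd /= ha hb.
  + by rewrite big1 // => st _; rewrite /Cnd /= ha hb /= mul0r.
- by rewrite big1 // => y _; rewrite big1 // => st _; rewrite /Cnd /= ha /= mul0r.
Qed.

Lemma ptraceE rhoI a b :
  ptrace (J := J) (encode C2 g (secret_state (I := I) rhoI)) a b =
  kappa * SG (Nc a b) rhoI.
Proof.
rewrite step2 (partition_big phiQ predT) // /SG mulr_sumr.
apply: eq_bigr => p _.
rewrite (eq_bigr (fun q => rhoI p.1 p.2 * (if Cnd a b q then kappa else 0)));
  last by move=> q /= /eqP <-; rewrite mulrC.
rewrite -mulr_sumr -big_mkcondr /=.
rewrite (eq_bigl (fun q => q \in [set q | Cnd a b q && (phiQ q == p)]));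
  last by move=> q; rewrite inE andbC.
by rewrite sumr_const [RHS]mulrCA mulr_natr.
Qed.

Lemma secure_iff : strongly_secure C2 g I J <-> Cond1 /\ Cond2.
Proof.
split.
- move=> H.
  have G a b := SG_const_good (N := Nc a b) (fun r1 r2 s1 s2 =>
     mulfI kappa_neq0 (etrans (esym (ptraceE r1 a b))
                       (etrans (H r1 r2 s1 s2 a b) (ptraceE r2 a b)))).
  split.
  + by apply: N_diag_conv => a b; apply: (G a b).2.
  + by apply: N_off_conv => a b; apply: (G a b).1.
- move=> [h1 h2] rho1 rho2 s1 s2 a b; rewrite !ptraceE; congr (_ * _).
  rewrite (SG_diag (0 : 'rV[F]_#|I|) (N_off h2 a b) (N_diag h1 a b) s1.2).
  by rewrite (SG_diag (0 : 'rV[F]_#|I|) (N_off h2 a b) (N_diag h1 a b) s2.2).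
Qed.

Definition Tset : {set PT F L n} := [set p | inC p.1 p.2].
Definition T0set : {set PT F L n} := [set p in Tset | projK I p.1 == 0].
Definition Phi (p : PT F L n) : 'rV[F]_(n + #|~: I|) := row_mx p.2 (projK (~: I) p.1).

Lemma Phi_lin a (p p' : PT F L n) : Phi (a *: p + p') = a *: Phi p + Phi p'.
Proof. by rewrite /Phi /= projK_lin scale_row_mx add_row_mx. Qed.

Lemma subsp_T : subsp Tset.
Proof.
split; first by rewrite inE inC00.
by move=> a u v; rewrite !inE => hu hv; apply: inC_lin.
Qed.

Lemma subsp_T0 : subsp T0set.
Proof.
split; first by rewrite !inE /=; apply/andP; split; [exact: inC00 | apply/eqP; exact: projK0].
move=> a u v; rewrite !inE => /andP [hu /eqP pu] /andP [hv /eqP pv].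
by rewrite inC_lin //= projK_lin pu pv scaler0 addr0.
Qed.

Lemma T0T : T0set \subset Tset.
Proof. by apply/subsetP => p; rewrite inE => /andP []. Qed.

Lemma C1'E : C1' C2 g I = Phi @: Tset.
Proof.
apply/setP => z; apply/imset2P/imsetP.
- by case=> s x _ hx ->; exists (s, x) => //; rewrite inE.
- by case=> [[s x]] hp ->; exists s x => //; rewrite inE in hp.
Qed.

Lemma C2'E : C2' C2 g I = Phi @: T0set.
Proof.
apply/setP => z; apply/imset2P/imsetP.
- case=> s x; rewrite inE => hs hx ->; exists (s, x) => //.
  by rewrite !inE /= hs andbT.
- case=> [[s x]]; rewrite !inE /= /inC => /andP [hx hs] ->.
  by exists s x => //; rewrite inE.
Qed.

Definition Jc := Jcoords #|~: I| J.
Definition Jb := Jbar_ext_coords #|~: I| J.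

Lemma Jc_eqP (x x' : 'rV[F]_n) (t t' : 'rV[F]_#|~: I|) :
  projK Jc (row_mx x t) = projK Jc (row_mx x' t') <-> projK J x = projK J x'.
Proof.
rewrite !projK_eqP; split => h i.
- by move=> iJ; have := h (lshift _ i) (imset_f _ iJ); rewrite !row_mxEl.
- by move=> /imsetP [j jJ ->]; rewrite !row_mxEl; apply: h.
Qed.

Lemma Jb_eq0P (x : 'rV[F]_n) (t : 'rV[F]_#|~: I|) :
  projK Jb (row_mx x t) = 0 <-> projK (~: J) x = 0 /\ t = 0.
Proof.
rewrite !projK_eq0P; split.
- move=> h; split.
  + move=> i iJ; have := h (lshift _ i); rewrite row_mxEl; apply.
    by rewrite inE; apply/orP; left; apply: imset_f.
  + apply/rowP => k; have := h (rshift n k); rewrite row_mxEr mxE; apply.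
    by rewrite inE; apply/orP; right; apply: imset_f; rewrite inE.
- case=> h1 /rowP h2 i; rewrite inE => /orP [] /imsetP [j hj ->].
  + by rewrite row_mxEl; apply: h1.
  + by rewrite row_mxEr h2 mxE.
Qed.

Lemma card_pos_subsp N (S : {set 'rV[F]_N}) : subsp S -> (0 < #|S|)%N.
Proof. by case=> S0 _; apply/card_gt0P; exists 0. Qed.

Lemma dims1_iff :
  ((dimS (projS Jc (C1' C2 g I)))%:Z - (dimS (projS Jc (C2' C2 g I)))%:Z = 0)
  <-> Cond1.
Proof.
rewrite C1'E C2'E /projS -!imset_comp.
have S1 := subsp_img (projK_lin Jc) (subsp_img Phi_lin subsp_T).
have S2 := subsp_img (projK_lin Jc) (subsp_img Phi_lin subsp_T0).
rewrite -!imset_comp in S1 S2.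
have sub21 : (projK Jc \o Phi) @: T0set \subset (projK Jc \o Phi) @: Tset.
  exact: imsetS T0T.
set Y1 := (projK Jc \o Phi) @: Tset in S1 sub21 *.
set Y2 := (projK Jc \o Phi) @: T0set in S2 sub21 *.
have step : (dimS Y1)%:Z - (dimS Y2)%:Z = 0 <-> Y1 \subset Y2.
  split.
  - move/eqP; rewrite subr_eq0 eqz_nat => /eqP hd.
    have : Y2 == Y1 by rewrite eqEcard sub21 (card_subsp S1) (card_subsp S2) hd /=.
    by move/eqP ->.
  - move=> h; have /eqP -> : Y2 == Y1 by rewrite eqEsubset sub21 h.
    by rewrite subrr.
rewrite step; split.
- move=> sub u; have [s hs] := projK_surj u.
  have : (projK Jc \o Phi) ((s, g s) : PT F L n) \in Y2.
    by apply: (subsetP sub); apply: imset_f; rewrite inE inCg.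
  case/imsetP => -[s' x']; rewrite !inE /= => /andP [hx' /eqP hI'].
  rewrite /Phi /= => /Jc_eqP hJ.
  exists (s - s'), (g s - x'); split.
  + exact: inC_sub (inCg s) hx'.
  + by rewrite projKB hJ subrr.
  + by rewrite projKB hs hI' subr0.
- move=> H1; apply/subsetP => y /imsetP [[s x]]; rewrite inE /= => hx ->.
  have [s0 [x0 [h0 hJ0 hI0]]] := H1 (projK I s).
  apply/imsetP; exists (s - s0, x - x0).
  + by rewrite !inE /= inC_sub // projKB hI0 subrr eqxx.
  + by rewrite /Phi /=; apply/Jc_eqP; rewrite projKB hJ0 subr0.
Qed.

Lemma dims2_iff :
  ((dimS (projS Jb (C1' C2 g I)))%:Z - (dimS (projS Jb (C2' C2 g I)))%:Z = #|I|%:Z)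
  <-> Cond2.
Proof.
rewrite C1'E C2'E /projS -!imset_comp.
have fl : forall a u v, (projK Jb \o Phi) (a *: u + v) =
                       a *: (projK Jb \o Phi) u + (projK Jb \o Phi) v.
  by move=> a u v; rewrite /= Phi_lin projK_lin.
have S1 := subsp_img fl subsp_T.
have S2 := subsp_img fl subsp_T0.
set fK := projK Jb \o Phi in fl S1 S2 *.
set Z1 := fK @: Tset in S1 *.
set Z2 := fK @: T0set in S2 *.
have E : ((dimS Z1)%:Z - (dimS Z2)%:Z = #|I|%:Z) <-> (#|Z1| = #|Z2| * #|F| ^ #|I|)%N.
  rewrite (card_subsp S1) (card_subsp S2) -expnD; split.
  - by move/eqP; rewrite subr_eq -PoszD eqz_nat => /eqP ->; rewrite addnC.
  - move/eqP; rewrite eqn_exp2l ?finNzRing_gt1 // => /eqP ->.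
    by rewrite PoszD addrAC subrr add0r.
rewrite E; clear E.
set Kr := [set x in Tset | fK x == 0].
set Kr0 := [set x in T0set | fK x == 0].
have h1 : #|Tset| = (#|Kr| * #|Z1|)%N.
  exact: card_fiber (fun u v => subspB subsp_T) (lin_sub fl).
have h0 : #|T0set| = (#|Kr0| * #|Z2|)%N.
  exact: card_fiber (fun u v => subspB subsp_T0) (lin_sub fl).
have fIl : forall a (u v : PT F L n), projK I (a *: u + v).1 = a *: projK I u.1 + projK I v.1.
  by move=> a u v; rewrite /= projK_lin.
have hI : #|Tset| = (#|T0set| * #|(fun p : PT F L n => projK I p.1) @: Tset|)%N.
  exact: card_fiber (fun u v => subspB subsp_T) (lin_sub fIl).
have imI : (fun p : PT F L n => projK I p.1) @: Tset = setT.
  apply/setP => u; rewrite inE; have [s hs] := projK_surj u.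
  by apply/imsetP; exists (s, g s); rewrite ?inE ?inCg.
rewrite imI cardsT card_mx mul1n in hI.
have sub0 : Kr0 \subset Kr.
  apply/subsetP => p; rewrite !inE => /andP [/andP [hp _] ->]; by rewrite hp.
have k0pos : (0 < #|Kr0|)%N.
  apply/card_gt0P; exists 0; rewrite !inE inC00 projK0 eqxx /=.
  by rewrite /fK /= /Phi /= !projK0 row_mx0 projK0 eqxx.
have z2pos : (0 < #|Z2|)%N by apply: card_pos_subsp.
have Qpos : (0 < #|F| ^ #|I|)%N by rewrite expn_gt0 (ltnW (finNzRing_gt1 F)).
have key : (#|Kr| * #|Z1| = #|Kr0| * (#|Z2| * #|F| ^ #|I|))%N.
  by rewrite -h1 hI h0 mulnA.
have Kr_iff : Cond2 <-> Kr \subset Kr0.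
  split.
  - move=> H2; apply/subsetP => -[s x]; rewrite !inE /= => /andP [hx].
    rewrite /fK /Phi /= => /eqP /Jb_eq0P [hJ hI'].
    have s0 := H2 _ _ hx hJ hI'.
    rewrite hx /=; apply/andP; split; first by rewrite s0; apply/eqP; exact: projK0.
    by apply/eqP/Jb_eq0P.
  - move=> sub s x hx hJ hI'.
    have : (s, x) \in Kr.
      by rewrite !inE /= hx /=; rewrite /fK /Phi /=; apply/eqP/Jb_eq0P.
    move/(subsetP sub); rewrite !inE /= => /andP [/andP [_ /eqP hs] _].
    exact: split0 hs hI'.
rewrite Kr_iff; split.
- move=> hz; rewrite hz in key.
  move/eqP: key; rewrite eqn_pmul2r ?muln_gt0 ?z2pos ?Qpos // => /eqP hk.
  have : Kr0 == Kr by rewrite eqEcard sub0 /=; apply: eq_leq hk.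
  by move/eqP ->; rewrite subxx.
- move=> sub; have /eqP hK : Kr0 == Kr by rewrite eqEsubset sub0 sub.
  rewrite -hK in key; move/eqP: key; rewrite eqn_pmul2l // => /eqP.
  by [].
Qed.

End Scheme.

Theorem proposition1 (F : finFieldType) (n L : nat)
  (C1 C2 : {vspace 'rV[F]_n}) (g : 'rV[F]_L -> 'rV[F]_n)
  (I : {set 'I_L}) (J : {set 'I_n}) :
  (C2 <= C1)%VS -> C2 != C1 -> (\dim C1 - \dim C2)%N = L ->
  is_quotient_iso C1 C2 g ->
  strongly_secure C2 g I J <->
  ((dimS (projS (Jcoords #|~: I| J) (C1' C2 g I)))%:Z
     - (dimS (projS (Jcoords #|~: I| J) (C2' C2 g I)))%:Z = 0
   /\ (dimS (projS (Jbar_ext_coords #|~: I| J) (C1' C2 g I)))%:Z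
     - (dimS (projS (Jbar_ext_coords #|~: I| J) (C2' C2 g I)))%:Z = #|I|%:Z).
Proof.
move=> _ _ _ [glin _ ginj].
rewrite (secure_iff C2 I J glin).
have E1 := dims1_iff C2 I J glin.
have E2 := dims2_iff C2 I J glin.
rewrite /Jc /Jb in E1 E2.
by rewrite E1 E2.
Qed.
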